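(* Let $M^\alpha,M^\beta$ be manifolds equipped with flows $\phi^\alpha,\phi^\beta$, let $N^\alpha,N^\beta$ be isolating neighborhoods, and let $h^{\beta\alpha}:M^\alpha\to M^\beta$ be an isolated map. Then there exists an open neighborhood $A$ of $(\phi^\alpha,h^{\beta\alpha},\phi^\beta)$ in $\mathscr{C}=\{(\tilde\phi^\alpha,\tilde h^{\beta\alpha},\tilde\phi^\beta)\in C^\infty(\mathbb{R}\times M^\alpha,M^\alpha)\times C^\infty(M^\alpha,M^\beta)\times C^\infty(\mathbb{R}\times M^\beta,M^\beta):N^\alpha,N^\beta\text{ are isolating neighborhoods of the flows }\tilde\phi^\alpha,\tilde\phi^\beta\}$, equipped with the compact-open topology, such that for every $(\tilde\phi^\alpha,\tilde h^{\beta\alpha},\tilde\phi^\beta)\in A$ the map $\tilde h^{\beta\alpha}$ is isolated with respect to $N^\alpha,N^\beta$ and the flows $\tilde\phi^\alpha,\tilde\phi^\beta$.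
   Context: A compact neighborhood $N$ is an isolating neighborhood for a flow $\phi$ if $\operatorname{Inv}(N,\phi)=\{x\in N:\phi(t,x)\in N\ \forall t\in\mathbb{R}\}\subset\operatorname{Int}N$. For a point $p$, $\mathcal{O}_+(p)=\{\phi(t,p):t\ge0\}$ and $\mathcal{O}_-(p)=\{\phi(t,p):t\le0\}$. A map $h:M^\alpha\to M^\beta$ is isolated (with respect to $N^\alpha,N^\beta$ and flows $\phi^\alpha,\phi^\beta$) if every $p$ in $S_h=\{p\in N^\alpha:\mathcal{O}_-(p)\subset N^\alpha,\ \mathcal{O}_+(h(p))\subset N^\beta\}$ satisfies $\mathcal{O}_-(p)\subset\operatorname{Int}N^\alpha$ and $\mathcal{O}_+(h(p))\subset\operatorname{Int}N^\beta$ (orbits taken with respect to $\phi^\alpha$, resp. $\phi^\beta$). *)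

(* Defs.v *)
From HB Require Import structures.
From mathcomp Require Import all_boot all_order all_algebra.
From mathcomp Require Import all_classical all_reals all_analysis.
Set Implicit Arguments. Unset Strict Implicit. Unset Printing Implicit Defensive.
Import Order.TTheory GRing.Theory Num.Theory.
Import numFieldNormedType.Exports.
Local Open Scope classical_set_scope.
Local Open Scope ring_scope.

Section Flows.
Context {R : realType} {M : topologicalType}.

Definition is_flow (phi : R * M -> M) : Prop :=
  continuous phi /\ (forall x, phi (0, x) = x) /\
  (forall s t x, phi (s + t, x) = phi (s, phi (t, x))).

Definition Inv (N : set M) (phi : R * M -> M) : set M :=
  [set x | N x /\ forall t : R, N (phi (t, x))].

Definition isolating_nbhd (N : set M) (phi : R * M -> M) : Prop :=
  compact N /\ Inv N phi `<=` interior N.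

Definition orbit_fwd (phi : R * M -> M) (p : M) : set M :=
  [set phi (t, p) | t in [set t : R | 0 <= t]].
Definition orbit_bwd (phi : R * M -> M) (p : M) : set M :=
  [set phi (t, p) | t in [set t : R | t <= 0]].
End Flows.

Section Isolated.
Context {R : realType} {Ma Mb : topologicalType}.

Definition S_h (Na : set Ma) (Nb : set Mb) (phia : R * Ma -> Ma)
  (h : Ma -> Mb) (phib : R * Mb -> Mb) : set Ma :=
  [set p | Na p /\ orbit_bwd phia p `<=` Na /\ orbit_fwd phib (h p) `<=` Nb].

Definition isolated_map (Na : set Ma) (Nb : set Mb) (phia : R * Ma -> Ma)
  (h : Ma -> Mb) (phib : R * Mb -> Mb) : Prop :=
  forall p, S_h Na Nb phia h phib p ->
    orbit_bwd phia p `<=` interior Na /\ orbit_fwd phib (h p) `<=` interior Nb.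
End Isolated.

(* Main.v *)
Require Import Defs.
From HB Require Import structures.
From mathcomp Require Import all_boot all_order all_algebra.
From mathcomp Require Import all_classical all_reals all_analysis.
From mathcomp Require Import lra.
Import Order.TTheory GRing.Theory Num.Theory.
Import numFieldNormedType.Exports.
Local Open Scope classical_set_scope.
Local Open Scope ring_scope.
Set Implicit Arguments. Unset Strict Implicit. Unset Printing Implicit Defensive.
Definition cnb {T : topologicalType} (x : T) :=
  forall U, nbhs x U -> exists K, [/\ compact K, nbhs x K & K `<=` U].

Lemma cnbP (T : topologicalType) : hausdorff_space T -> locally_compact [set: T] ->
  forall x : T, cnb x.
Proof.
move=> hT lcT x U Ux.
have [C] := lcT x I; rewrite withinET => Cx [cptC clC].
have := compact_regular hT cptC Cx Ux => -[B Bx BU].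
exists (C `&` closure B); split.
- by apply: compact_closedI => //; exact: closed_closure.
- by apply: filterI => //; apply: filterS Bx; exact: subset_closure.
- by move=> y [_ /BU].
Qed.

Lemma cnbX (T U : topologicalType) (a : T) (b : U) : cnb a -> cnb b -> cnb (a, b).
Proof.
move=> ca cb S [[P Q] [Pa Qb] PQS].
have [K1 [c1 n1 s1]] := ca _ Pa; have [K2 [c2 n2 s2]] := cb _ Qb.
exists (K1 `*` K2); split.
- exact: compact_setX.
- by exists (K1, K2).
- by move=> [y z] [/= /s1 ? /s2 ?]; apply: PQS.
Qed.
Lemma evalC (X Y : topologicalType) (g0 : {compact-open, X -> Y}) (x0 : X) (V : set Y) :
  {for x0, continuous (g0 : X -> Y)} -> cnb x0 -> nbhs ((g0 : X -> Y) x0) V ->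
  exists2 W : set {compact-open, X -> Y}, nbhs g0 W &
    exists2 B, nbhs x0 B & forall g x, W g -> B x -> V ((g : X -> Y) x).
Proof.
move=> cg cx; rewrite nbhsE; case=> O [oO Og] OV.
have : nbhs x0 ((g0 : X -> Y) @^-1` O) by apply: cg; exact: open_nbhs_nbhs.
move=> /cx [K [cK Kx KO]].
exists [set g : {compact-open, X -> Y} | (g : X -> Y) @` K `<=` O].
  apply: open_nbhs_nbhs; split; first exact: compact_open_open.
  by move=> _ [y Ky <-]; exact: KO.
by exists K => // g x gK Kx'; apply: OV; apply: gK; exists x.
Qed.
Lemma claim1 (R : realType) (M : topologicalType) (N : set M) (phi : R * M -> M) :
  hausdorff_space M -> locally_compact [set: M] -> continuous phi ->
  compact N -> Defs.Inv N phi `<=` interior N ->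
  exists T : R, exists2 W : set {compact-open, (R * M)%type -> M},
    nbhs (phi : {compact-open, (R * M)%type -> M}) W &
    forall f x, W f -> N x -> ~ interior N x ->
      exists s, `|s| <= T /\ ~ N ((f : R * M -> M) (s, x)).
Proof.
move=> hM lcM cphi cN iN.
have clN : closed N by exact: compact_closed.
have cK : compact (N `&` ~` interior N).
  by apply: compact_closedI => //; apply: open_closedC; exact: open_interior.
have cnR : forall t : R, cnb t by apply: cnbP; [exact: Rhausdorff | exact: locally_compactR].
have cnM : forall x : M, cnb x by exact: cnbP.
pose Pr (i : {compact-open, (R * M)%type -> M} * R) (x : M) :=
  exists s, `|s| <= i.2 /\ ~ N ((i.1 : R * M -> M) (s, x)).
have H : forall x, (N `&` ~` interior N) x ->
   \forall x' \near x & i \near (filter_prod (nbhs (phi : {compact-open, (R * M)%type -> M})) (pinfty_nbhs R)), Pr i x'.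
  move=> x [Nx nix].
  have [t0 nt0] : exists t0, ~ N (phi (t0, x)).
    apply: contrapT => H; apply: nix; apply: iN; split => // t.
    by apply: contrapT => H'; apply: H; exists t.
  have := @evalC _ _ (phi : {compact-open, (R * M)%type -> M}) (t0, x) (~` N) (cphi _) (cnbX (cnR t0) (cnM x)).
  case.
    by apply: open_nbhs_nbhs; split => //; exact: closed_openC.
  move=> W Wn [B [[B1 B2] [B1n B2n] B12] WB].
  exists (B2, W `*` [set T | `|t0| <= T]).
    split => //; exists (W, [set T | `|t0| <= T]) => //; split => //.
    by apply: nbhs_pinfty_ge; exact: num_real.
  move=> [x' [f T]] /= [B2x' [Wf Tt]]; exists t0; split => //.
  apply: WB => //; apply: B12; split => //=; exact: nbhs_singleton.
have := (proj1 (compact_near_coveringP _) cK) _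
  (filter_prod (nbhs (phi : {compact-open, (R * M)%type -> M})) (pinfty_nbhs R)) Pr _ H.
move=> HH; case: HH => -[W Ts] [Wn Tn] WT.
  idtac. have [T0 [T0r HT]] := Tn.
  exists (T0 + 1), W => // f x Wf Nx nix.
  have := WT (f, T0 + 1) _ x _; case => //.
  + split => //; apply: HT; by rewrite ltrDl.
  by move=> s [sT nN]; exists s.
Qed.
Lemma nbP1 (A B C : topologicalType) (a : A) (b : B) (c : C) (W : set A) :
  nbhs a W -> nbhs (a, b, c) [set q | W q.1.1].
Proof.
move=> Wa; exists ([set q | W q.1], setT); first split => /=.
- exists (W, setT); first by split => //; exact: filterT.
  by move=> [x y] [/= ? ?].
- exact: filterT.
- by move=> [[x y] z] [/= ? ?].
Qed.

Lemma nbP2 (A B C : topologicalType) (a : A) (b : B) (c : C) (W : set B) :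
  nbhs b W -> nbhs (a, b, c) [set q | W q.1.2].
Proof.
move=> Wa; exists ([set q | W q.2], setT); first split => /=.
- exists (setT, W); first by split => //; exact: filterT.
  by move=> [x y] [/= ? ?].
- exact: filterT.
- by move=> [[x y] z] [/= ? ?].
Qed.

Lemma nbP3 (A B C : topologicalType) (a : A) (b : B) (c : C) (W : set C) :
  nbhs c W -> nbhs (a, b, c) [set q | W q.2].
Proof.
move=> Wa; exists (setT, W); first split => //=.
- exact: filterT.
- by move=> [[x y] z] [/= ? ?].
Qed.
Section Inner.
Context (R : realType) (Ma Mb : topologicalType).
Local Notation CA := {compact-open, (R * Ma)%type -> Ma}.
Local Notation CH := {compact-open, Ma -> Mb}.
Local Notation CB := {compact-open, (R * Mb)%type -> Mb}.

Lemma inA (cnM : forall x : Ma, cnb x) (phia : R * Ma -> Ma) (h : Ma -> Mb)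
  (phib : R * Mb -> Mb) (cpa : continuous phia) (O : set Ma) (oO : open O)
  (a b : R) (x : Ma) :
  (forall t, t \in `[a, b] -> O (phia (t, x))) ->
  \forall j \near filter_prod (nbhs x) (nbhs ((phia, h, phib) : CA * CH * CB)),
    forall t, t \in `[a, b] -> O ((j.2.1.1 : R * Ma -> Ma) (t, j.1)).
Proof.
move=> Hx.
have cnR : forall t : R, cnb t by apply: cnbP; [exact: Rhausdorff | exact: locally_compactR].
have cK : compact [set t : R | t \in `[a, b]] by exact: segment_compact.
pose Pr (j : Ma * (CA * CH * CB)) (t : R) := O ((j.2.1.1 : R * Ma -> Ma) (t, j.1)).
have H : forall t0, [set t : R | t \in `[a, b]] t0 ->
   \forall t \near t0 & j \near filter_prod (nbhs x) (nbhs ((phia, h, phib) : CA * CH * CB)), Pr j t.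
  move=> t0 /= t0ab.
  have := @evalC _ _ (phia : CA) (t0, x) O (cpa _) (cnbX (cnR t0) (cnM x)).
  case; first by apply: open_nbhs_nbhs; split => //; exact: Hx.
  move=> W Wn [B [[B1 B2] [B1n B2n] B12] WB].
  exists (B1, B2 `*` [set Q : CA * CH * CB | W Q.1.1]).
    split => //; exists (B2, [set Q : CA * CH * CB | W Q.1.1]) => //.
    by split => //; exact: nbP1.
  move=> [t [x' Q]] /= [B1t [B2x' WQ]].
  by apply: WB => //; apply: B12.
have := (proj1 (compact_near_coveringP _) cK) _ (filter_prod (nbhs x) (nbhs ((phia, h, phib) : CA * CH * CB))) Pr _ H.
move=> /(_ (filter_prod_filter _ _)) HH; apply: (@filterS _ (filter_prod (nbhs x) (nbhs ((phia, h, phib) : CA * CH * CB))) _ _ _ _ HH) => j HK t tab; exact: HK.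
Qed.

Lemma inB (cnM : forall x : Ma, cnb x) (cnMb : forall x : Mb, cnb x)
  (phia : R * Ma -> Ma) (h : Ma -> Mb)
  (phib : R * Mb -> Mb) (ch : continuous h) (cpb : continuous phib)
  (O : set Mb) (oO : open O) (a b : R) (x : Ma) :
  (forall u, u \in `[a, b] -> O (phib (u, h x))) ->
  \forall j \near filter_prod (nbhs x) (nbhs ((phia, h, phib) : CA * CH * CB)),
    forall u, u \in `[a, b] -> O ((j.2.2 : R * Mb -> Mb) (u, (j.2.1.2 : Ma -> Mb) j.1)).
Proof.
move=> Hx.
have cnR : forall t : R, cnb t by apply: cnbP; [exact: Rhausdorff | exact: locally_compactR].
have cK : compact [set t : R | t \in `[a, b]] by exact: segment_compact.
pose Pr (j : Ma * (CA * CH * CB)) (u : R) :=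
  O ((j.2.2 : R * Mb -> Mb) (u, (j.2.1.2 : Ma -> Mb) j.1)).
have H : forall u0, [set t : R | t \in `[a, b]] u0 ->
   \forall u \near u0 & j \near filter_prod (nbhs x) (nbhs ((phia, h, phib) : CA * CH * CB)), Pr j u.
  move=> u0 /= u0ab.
  have := @evalC _ _ (phib : CB) (u0, h x) O (cpb _) (cnbX (cnR u0) (cnMb (h x))).
  case; first by apply: open_nbhs_nbhs; split => //; exact: Hx.
  move=> Wb Wbn [B [[B1 B2] [B1n B2n] B12] WB].
  have := @evalC _ _ (h : CH) x B2 (ch _) (cnM x) B2n.
  move=> [Wh Whn [Bx Bxn WhB]].
  exists (B1, Bx `*` [set Q : CA * CH * CB | Wh Q.1.2 /\ Wb Q.2]).
    split => //; exists (Bx, [set Q : CA * CH * CB | Wh Q.1.2 /\ Wb Q.2]) => //.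
    split => //; apply: filterI; [exact: nbP2 | exact: nbP3].
  move=> [u [x' Q]] /= [B1u [Bxx' [WhQ WbQ]]].
  apply: WB => //; apply: B12; split => //=; exact: WhB.
have := (proj1 (compact_near_coveringP _) cK) _ (filter_prod (nbhs x) (nbhs ((phia, h, phib) : CA * CH * CB))) Pr _ H.
move=> /(_ (filter_prod_filter _ _)) HH; apply: (@filterS _ (filter_prod (nbhs x) (nbhs ((phia, h, phib) : CA * CH * CB))) _ _ _ _ HH) => j HK u uab; exact: HK.
Qed.
End Inner.
Section Claim2.
Context (R : realType) (Ma Mb : topologicalType).
Local Notation CA := {compact-open, (R * Ma)%type -> Ma}.
Local Notation CH := {compact-open, Ma -> Mb}.
Local Notation CB := {compact-open, (R * Mb)%type -> Mb}.

Lemma claim2 (cnM : forall x : Ma, cnb x) (cnMb : forall x : Mb, cnb x)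
  (phia : R * Ma -> Ma) (h : Ma -> Mb) (phib : R * Mb -> Mb)
  (cpa : continuous phia) (cpb : continuous phib) (ch : continuous h)
  (Na : set Ma) (Nb : set Mb) (cNa : compact Na) (clNa : closed Na) (clNb : closed Nb)
  (iso : isolated_map Na Nb phia h phib) (T : R) :
  nbhs ((phia, h, phib) : CA * CH * CB) [set Q : CA * CH * CB | forall p, Na p ->
    (forall s, s <= 0 -> Na ((Q.1.1 : R * Ma -> Ma) (s, p))) ->
    (forall u, 0 <= u -> Nb ((Q.2 : R * Mb -> Mb) (u, (Q.1.2 : Ma -> Mb) p))) ->
    (forall t, t \in `[- T, 0] -> (Na° `|` ~` Na) ((Q.1.1 : R * Ma -> Ma) (t, p))) /\
    (forall u, u \in `[0, T] -> (Nb° `|` ~` Nb) ((Q.2 : R * Mb -> Mb) (u, (Q.1.2 : Ma -> Mb) p)))].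
Proof.
have cnR : forall t : R, cnb t by apply: cnbP; [exact: Rhausdorff | exact: locally_compactR].
pose Pr (Q : CA * CH * CB) (p : Ma) := Na p ->
    (forall s, s <= 0 -> Na ((Q.1.1 : R * Ma -> Ma) (s, p))) ->
    (forall u, 0 <= u -> Nb ((Q.2 : R * Mb -> Mb) (u, (Q.1.2 : Ma -> Mb) p))) ->
    (forall t, t \in `[- T, 0] -> (Na° `|` ~` Na) ((Q.1.1 : R * Ma -> Ma) (t, p))) /\
    (forall u, u \in `[0, T] -> (Nb° `|` ~` Nb) ((Q.2 : R * Mb -> Mb) (u, (Q.1.2 : Ma -> Mb) p))).
have oA : open (Na° `|` ~` Na) by apply: openU; [exact: open_interior | exact: closed_openC].
have oB : open (Nb° `|` ~` Nb) by apply: openU; [exact: open_interior | exact: closed_openC].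
have H : forall x, Na x ->
   filter_prod (nbhs x) (nbhs ((phia, h, phib) : CA * CH * CB)) (fun z => Pr z.2 z.1).
  move=> x Nax.
  have [[bw fw]|] := pselect ((forall s, s <= 0 -> Na (phia (s, x))) /\
                             (forall u, 0 <= u -> Nb (phib (u, h x)))).
    have [ibw ifw] : orbit_bwd phia x `<=` Na° /\ orbit_fwd phib (h x) `<=` Nb°.
      apply: iso; split => //; split.
      - by move=> _ [t /= tle <-]; exact: bw.
      - by move=> _ [t /= tle <-]; exact: fw.
    have hxA : forall t, t \in `[- T, 0] -> (Na° `|` ~` Na) (phia (t, x)).
      move=> t; rewrite in_itv /= => /andP [_ t0]; left; apply: ibw; exists t => //.
    have hxB : forall u, u \in `[0, T] -> (Nb° `|` ~` Nb) (phib (u, h x)).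
      move=> u; rewrite in_itv /= => /andP [u0 _]; left; apply: ifw; exists u => //.
    have HA := @inA R Ma Mb cnM phia h phib cpa _ oA (- T) 0 x hxA.
    have HB := @inB R Ma Mb cnM cnMb phia h phib ch cpb _ oB 0 T x hxB.
    case: HA => -[A1 A2] [A1n A2n] HA; case: HB => -[B1 B2] [B1n B2n] HB.
    exists (A1 `&` B1, A2 `&` B2); first by split; apply: filterI.
    move=> [x' Q] /= [[A1x B1x] [A2Q B2Q]] _ _ _; split.
    + by move=> t tin; apply: (HA (x', Q)).
    + by move=> u uin; apply: (HB (x', Q)).
  move=> /not_andP [/existsNP [s /not_implyP [s0 nNa]] | /existsNP [u /not_implyP [u0 nNb]]].
  - have := @evalC _ _ (phia : CA) (s, x) (~` Na) (cpa _) (cnbX (cnR s) (cnM x)).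
    case; first by apply: open_nbhs_nbhs; split => //; exact: closed_openC.
    move=> W Wn [B [[B1 B2] [B1n B2n] B12] WB].
    exists (B2, [set Q : CA * CH * CB | W Q.1.1]); first by split => //; exact: nbP1.
    move=> [x' Q] /= [B2x' WQ] _ bw'; exfalso; apply: (WB _ (s, x') WQ _ (bw' _ s0)).
    by apply: B12; split => //=; exact: nbhs_singleton.
  - have := @evalC _ _ (phib : CB) (u, h x) (~` Nb) (cpb _) (cnbX (cnR u) (cnMb (h x))).
    case; first by apply: open_nbhs_nbhs; split => //; exact: closed_openC.
    move=> Wb Wbn [B [[B1 B2] [B1n B2n] B12] WB].
    have := @evalC _ _ (h : CH) x B2 (ch _) (cnM x) B2n.
    move=> [Wh Whn [Bx Bxn WhB]].
    exists (Bx, [set Q : CA * CH * CB | Wh Q.1.2 /\ Wb Q.2]).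
      by split => //; apply: filterI; [exact: nbP2 | exact: nbP3].
    move=> [x' Q] /= [Bxx' [WhQ WbQ]] _ _ fw'; exfalso.
    apply: (WB _ (u, (Q.1.2 : Ma -> Mb) x') WbQ _ (fw' _ u0)).
    apply: B12; split => //=; [exact: nbhs_singleton | exact: WhB].
have := (proj1 (compact_near_coveringP _) cNa) _ (nbhs ((phia, h, phib) : CA * CH * CB)) Pr.
move=> /(_ _ H) HH.
apply: (@filterS _ (nbhs ((phia, h, phib) : CA * CH * CB)) _ _ _ _ HH).
by move=> Q HQ p Np; exact: HQ.
Qed.
End Claim2.
Unset Implicit Arguments.
Set Strict Implicit.
Theorem proposition5p2 (R : realType) (Ma Mb : topologicalType)
  (hsMa : hausdorff_space Ma) (lcMa : locally_compact [set: Ma])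
  (hsMb : hausdorff_space Mb) (lcMb : locally_compact [set: Mb])
  (Na : set Ma) (Nb : set Mb)
  (phia : R * Ma -> Ma) (h : Ma -> Mb) (phib : R * Mb -> Mb) :
  is_flow phia -> is_flow phib -> continuous h ->
  isolating_nbhd Na phia -> isolating_nbhd Nb phib ->
  isolated_map Na Nb phia h phib ->
  exists A : set ({compact-open, (R * Ma)%type -> Ma} * {compact-open, Ma -> Mb}
                  * {compact-open, (R * Mb)%type -> Mb}),
    open A /\ A (phia, h, phib) /\
    forall (phia' : R * Ma -> Ma) (h' : Ma -> Mb) (phib' : R * Mb -> Mb),
      A (phia', h', phib') ->
      is_flow phia' -> continuous h' -> is_flow phib' ->
      isolating_nbhd Na phia' -> isolating_nbhd Nb phib' ->
      isolated_map Na Nb phia' h' phib'.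
Proof.
move=> [cpa _] [cpb _] ch [cNa iNa] [cNb iNb] iso.
have cnM : forall x : Ma, cnb x by exact: cnbP.
have cnMb : forall x : Mb, cnb x by exact: cnbP.
have clNa : closed Na by exact: compact_closed.
have clNb : closed Nb by exact: compact_closed.
have [T1 [W1 W1n HW1]] := claim1 hsMa lcMa cpa cNa iNa.
have [T2 [W2 W2n HW2]] := claim1 hsMb lcMb cpb cNb iNb.
have C1 := claim2 cnM cnMb cpa cpb ch cNa clNa clNb iso T1.
have C2 := claim2 cnM cnMb cpa cpb ch cNa clNa clNb iso T2.
set X := ({compact-open, (R * Ma)%type -> Ma} * {compact-open, Ma -> Mb}
                  * {compact-open, (R * Mb)%type -> Mb})%type.
set G := [set Q : X | is_flow (Q.1.1 : R * Ma -> Ma) -> is_flow (Q.2 : R * Mb -> Mb) ->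
   isolated_map Na Nb (Q.1.1 : R * Ma -> Ma) (Q.1.2 : Ma -> Mb) (Q.2 : R * Mb -> Mb)].
have nG : nbhs ((phia, h, phib) : X) G.
  have N1 := @nbP1 _ {compact-open, Ma -> Mb} {compact-open, (R * Mb)%type -> Mb} _ h phib _ W1n.
  have N2 := @nbP3 {compact-open, (R * Ma)%type -> Ma} {compact-open, Ma -> Mb} _ phia h _ _ W2n.
  have := filterI (filterI N1 N2) (filterI C1 C2).
  move=> /(_ (nbhs_filter _) (nbhs_filter _) (nbhs_filter _)) HH; apply: (@filterS X (nbhs ((phia, h, phib) : X)) _ _ _ _ HH) => -[[f g] k] /= [[Wf Wk] [D1 D2]] [_ [_ fflow]] [_ [_ kflow]] p [Np [bwp fwp]].
  move: fflow kflow => /= fflow kflow.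
  have bw : forall s, s <= 0 -> Na (f (s, p)).
    by move=> s s0; apply: bwp; exists s.
  have fw : forall u, 0 <= u -> Nb (k (u, g p)).
    by move=> u u0; apply: fwp; exists u.
  split.
  - move=> _ [t /= t0 <-]; apply: contrapT => nint.
    have Nz : Na (f (t, p)) by exact: bw.
    have [s [sT nN]] := HW1 f _ Wf Nz nint.
    rewrite -fflow in nN.
    have st : 0 < s + t.
      by rewrite ltNge; apply/negP => st0; apply: nN; exact: bw.
    have [D11 _] := D1 p Np bw fw.
    have : t \in `[- T1, 0].
      rewrite in_itv /= t0 andbT.
      move: sT; rewrite ler_norml => /andP [_ sT1].
      lra.
    by move=> /D11 [//|//].
  - move=> _ [u /= u0 <-]; apply: contrapT => nint.
    have Nz : Nb (k (u, g p)) by exact: fw.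
    have [s [sT nN]] := HW2 k _ Wk Nz nint.
    rewrite -kflow in nN.
    have su : s + u < 0.
      by rewrite ltNge; apply/negP => su0; apply: nN; exact: fw.
    have [_ D22] := D2 p Np bw fw.
    have : u \in `[0, T2].
      rewrite in_itv /= u0 /=.
      move: sT; rewrite ler_norml => /andP [sT1 _].
      lra.
    by move=> /D22 [//|//].
exists (interior G); split; first exact: open_interior.
split; first exact: nG.
move=> phia' h' phib' AQ fa' _ fb' _ _.
exact: (nbhs_singleton AQ).
Qed.
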